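(* For all ideals $\mathcal{I}$ and $\mathcal{J}$ on $\omega$, $\rho^{(\mathrm{FIN}\otimes\mathcal{I})}\not\approx_K\rho_{\mathcal{J}}$ (for any choice of almost disjoint family and enumeration in the definition of $\rho^{(\mathrm{FIN}\otimes\mathcal{I})}$).
   Context: An ideal on a set $X$: $\mathcal{J}\subseteq\mathcal{P}(X)$ with $\emptyset\in\mathcal{J}$, $X\notin\mathcal{J}$, closed under finite unions and subsets, containing all finite sets; $\mathcal{J}^+=\mathcal{P}(X)\setminus\mathcal{J}$. For an ideal $\mathcal{J}$ on $\omega$, $\rho_{\mathcal{J}}\colon\mathcal{J}^+\to[\omega]^\omega$, $\rho_{\mathcal{J}}(A)=A$ (domain family $\mathcal{J}^+\subseteq[\omega]^\omega$). $\mathrm{FIN}\otimes\mathcal{I}$ is the ideal on $\omega\times\omega$: $A\in\mathrm{FIN}\otimes\mathcal{I}$ iff $\{n:\{k:(n,k)\in A\}\notin\mathcal{I}\}$ is finite. Definition of $\rho^{(\mathrm{FIN}\otimes\mathcal{I})}$: let $\mathcal{A}=\{A_\alpha:\alpha<\mathfrak{c}\}$ be an almost disjoint family on $\omega$ (pairwise distinct infinite sets with pairwise finite intersections), $(\mathrm{FIN}\otimes\mathcal{I})^+=\{B_\alpha:\alpha<\mathfrak{c}\}$ an enumeration, $P_n=\{n\}\times\omega$, $\overline{\mathcal{A}}=\{A\setminus K:A\in\mathcal{A},K\in[\omega]^{<\omega}\}$, and $\rho^{(\mathrm{FIN}\otimes\mathcal{I})}(A_\alpha\setminus K)=B_\alpha\setminus\bigcup\{P_n:n<\max(K\cap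 A_\alpha)\}$, with $\max\emptyset=0$; it maps $\overline{\mathcal{A}}$ into $[\omega\times\omega]^\omega$. Katětov order for functions $\rho_i\colon\mathcal{F}_i\to[\Lambda_i]^\omega$ with $\mathcal{F}_i\subseteq[\Omega_i]^\omega$: $\rho_2\leq_K\rho_1$ if there is $f\colon\Lambda_1\to\Lambda_2$ such that for every $F_1\in\mathcal{F}_1$ there is $F_2\in\mathcal{F}_2$ such that for every finite $K_1\subseteq\Omega_1$ there is a finite $K_2\subseteq\Omega_2$ with $\rho_2(F_2\setminus K_2)\subseteq f[\rho_1(F_1\setminus K_1)]$. $\rho_1\approx_K\rho_2$ means $\rho_1\leq_K\rho_2$ and $\rho_2\leq_K\rho_1$. *)

(* Defs.v *)
From mathcomp Require Import all_boot.
From mathcomp Require Import boolp classical_sets cardinality.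
Set Implicit Arguments.
Unset Strict Implicit.
Unset Printing Implicit Defensive.
Local Open Scope classical_set_scope.

Definition is_ideal (X : Type) (J : set (set X)) : Prop :=
  [/\ J set0,
      ~ J setT,
      (forall A B, J A -> J B -> J (A `|` B)),
      (forall A B, B `<=` A -> J A -> J B) &
      (forall A, finite_set A -> J A)].

Definition positive (X : Type) (J : set (set X)) : set (set X) := ~` J.

(* rho_J : J^+ -> [omega]^omega, A |-> A  (the domain family is J^+) *)
Definition rho_ideal (A : set nat) : set nat := A.

Definition FIN_tensor (I : set (set nat)) : set (set (nat * nat)) :=
  fun A => finite_set [set n | ~ I [set k | A (n, k)]].

(* Katetov order for functions rho_i : F_i -> [Lambda_i]^omega,
   F_i subset of [Omega_i]^omega.  rho_i is given as a total function on
   subsets of Omega_i; only its values on the domain family F_i (and on the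
   sets F \ K with F in F_i, K finite, which lie in F_i in all cases used)
   matter.  katetov_le F2 rho2 F1 rho1  means  rho2 <=_K rho1. *)
Definition katetov_le (Om2 La2 Om1 La1 : Type)
    (F2 : set (set Om2)) (rho2 : set Om2 -> set La2)
    (F1 : set (set Om1)) (rho1 : set Om1 -> set La1) : Prop :=
  exists f : La1 -> La2,
    forall X1, F1 X1 ->
      exists2 X2, F2 X2 &
        forall K1 : set Om1, finite_set K1 ->
          exists2 K2 : set Om2, finite_set K2 &
            rho2 (X2 `\` K2) `<=` f @` (rho1 (X1 `\` K1)).

Definition katetov_equiv (Om1 La1 Om2 La2 : Type)
    (F1 : set (set Om1)) (rho1 : set Om1 -> set La1)
    (F2 : set (set Om2)) (rho2 : set Om2 -> set La2) : Prop :=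
  katetov_le F1 rho1 F2 rho2 /\ katetov_le F2 rho2 F1 rho1.

Definition almost_disjoint_family (T : Type) (A : T -> set nat) : Prop :=
  (forall a, ~ finite_set (A a)) /\
  (forall a b, a <> b -> A a <> A b /\ finite_set (A a `&` A b)).

Definition enumerates (T : Type) (B : T -> set (nat * nat))
    (P : set (set (nat * nat))) : Prop :=
  injective B /\ (forall X, P X <-> exists a, B a = X).

Definition Abar (T : Type) (A : T -> set nat) : set (set nat) :=
  [set X | exists a, exists2 K, finite_set K & X = A a `\` K].

(* rho^(FIN (x) I)(A_alpha \ K) = B_alpha \ U{P_n : n < max(K cap A_alpha)},
   max emptyset = 0.  A pair (n,k) survives iff n >= max (K cap A_alpha),
   i.e. iff every m in K cap A_alpha satisfies m <= n.  Since the
   representation X = A_alpha \ K determines alpha and K cap A_alpha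
   (A is almost disjoint), the union over all representations below is
   exactly the value of rho on X in Abar (and it is empty off Abar). *)
Definition rho_FIN (T : Type) (A : T -> set nat) (B : T -> set (nat * nat))
    (X : set nat) : set (nat * nat) :=
  [set p | exists a, exists2 K, finite_set K &
     [/\ X = A a `\` K, B a p & (forall m, K m -> A a m -> (m <= p.1)%N)]].

(* Main.v *)
Require Import Defs.
From mathcomp Require Import all_boot finmap.
From mathcomp Require Import boolp classical_sets cardinality.
Local Open Scope classical_set_scope.

Lemma fin_bound (K : set nat) : finite_set K -> exists N, forall x, K x -> (x < N)%N.
Proof.
move=> /finite_fsetP [X ->]; exists (\max_(x <- enum_fset X) x).+1 => x /= xX.
by rewrite ltnS; apply: (@leq_bigmax_seq _ _ xpredT id).
Qed.

Lemma bound_fin (K : set nat) N : (forall x, K x -> (x < N)%N) -> finite_set K.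
Proof. by move=> H; apply: (sub_finite_set _ (finite_II N)) => x /H. Qed.

Lemma ideal_fin_union (I : set (set nat)) : is_ideal I ->
  forall n (P : nat -> set nat), (forall m, (m < n)%N -> I (P m)) ->
  I [set k | exists2 m, (m < n)%N & P m k].
Proof.
move=> [I0 IT IU Isub Ifin]; elim=> [|n IH] P HP.
  by apply: (Isub _ _ _ I0) => k [m].
apply: (Isub _ _ _ (IU _ _ (IH P (fun m hm => HP m (ltnW hm))) (HP n (ltnSn n)))).
move=> k [m hm Pk]; rewrite ltnS leq_eqVlt in hm; case/orP: hm => [/eqP e|hm].
  by right; rewrite -e.
by left; exists m.
Qed.

Lemma FIN_sub (I : set (set nat)) : is_ideal I ->
  forall C D, C `<=` D -> FIN_tensor I D -> FIN_tensor I C.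
Proof.
move=> [I0 IT IU Isub Ifin] C D CD FD; apply: sub_finite_set FD => n /= nC ID.
by apply: nC; apply: (Isub _ _ _ ID) => k /CD.
Qed.

Theorem proposition5p4 (I J : set (set nat)) (T : Type)
    (A : T -> set nat) (B : T -> set (nat * nat)) :
  is_ideal I -> is_ideal J ->
  almost_disjoint_family A ->
  enumerates B (positive (FIN_tensor I)) ->
  ~ katetov_equiv (Abar A) (rho_FIN A B) (positive J) rho_ideal.
Proof.
move=> hI hJ [Ainf Adisj] [Binj Benum] [[g Hg] [f Hf]].
have Ifu := ideal_fin_union _ hI.
have FS := FIN_sub _ hI.
case: hI => I0 IT IU Isub Ifin.
have Bpos : forall a, ~ FIN_tensor I (B a).
  by move=> a; apply: (Benum (B a)).2; exists a.
have G : forall X, ~ J X -> ~ FIN_tensor I (g @` X).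
  move=> X JX Fg.
  have [X2 [a [K finK ->]] H] := Hg X JX.
  have [K2 finK2 H2] := H set0 (finite_set0 _).
  pose C := [set p | B a p /\ forall m, (K `|` K2) m -> A a m -> (m <= p.1)%N].
  have FC : FIN_tensor I C.
    apply: (FS _ _ _ Fg) => p Cp.
    have : rho_FIN A B ((A a `\` K) `\` K2) p.
      exists a; exists (K `|` K2); first by rewrite finite_setU.
      by case: Cp => Bp Hm; split => //; rewrite setDDl.
    by move/H2 => [x [Xx _] <-]; exists x.
  apply: (Bpos a).
  have [N HN] : exists N, forall x, (K `|` K2) x -> (x < N)%N.
    by apply: fin_bound; rewrite finite_setU.
  have : [set n | ~ I [set k | B a (n, k)]] `<=`
         [set n | ~ I [set k | C (n, k)]] `|` `I_N.
    move=> n /= nI; have [nN|nN] := pselect (n < N)%N; first by right.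
    left => IC; apply: nI; apply: (Isub _ _ _ IC) => k Bk; split => // m Km _.
    by apply: ltnW; apply: leq_trans (HN m Km) _; rewrite leqNgt; apply/negP.
  by move/sub_finite_set; apply; rewrite finite_setU; split => //; exact: finite_II.
have F : forall a, exists2 X, ~ J X & forall N, exists2 K2, finite_set K2 &
    forall x, X x -> ~ K2 x -> exists q, [/\ B a q, (N <= q.1)%N & f q = x].
  move=> a.
  have [X2 X2J H] := Hf (A a) (ex_intro _ a (ex_intro2 _ _ set0 (finite_set0 _) (esym (setD0 _)))).
  exists X2 => // N.
  have [e Ae Ne] : exists2 e, A a e & (N <= e)%N.
    apply: contrapT => nE; apply: (Ainf a); apply: (bound_fin _ N) => x Ax.
    by rewrite ltnNge; apply/negP => Nx; apply: nE; exists x.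
  have [K2 fK2 H2] := H [set e] (finite_set1 e).
  exists K2 => // x Xx nK2.
  have [q [a' [K' fK' [E Bq Hm]]] fq] := H2 x (conj Xx nK2).
  have aa : a' = a.
    apply: contrapT => neq; have [_ fin] := Adisj a a' (nesym neq).
    apply: (Ainf a).
    have : A a `<=` (A a `&` A a') `|` [set e].
      move=> y Ay; have [ye|ye] := pselect (y = e); first by right.
      left; split => //.
      have : (A a' `\` K') y by rewrite -E; split.
      by case.
    by move/sub_finite_set; apply; rewrite finite_setU; split => //; exact: finite_set1.
  subst a'; exists q; split => //.
  apply: (leq_trans Ne (Hm e _ Ae)).
  apply: contrapT => nK.
  have : (A a `\` [set e]) e by rewrite E; split.
  by case => _; apply.
have Key : forall Bc S, ~ FIN_tensor I Bc -> finite_set S ->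
    (forall m, ~ S m -> exists N, forall q, Bc q -> (N <= q.1)%N -> (g (f q)).1 <> m) ->
    False.
  move=> Bc S Bcpos fS HS.
  have [a Ba] := (Benum Bc).1 Bcpos.
  have [X XJ HX] := F a.
  apply: (G X XJ); rewrite /FIN_tensor.
  apply: sub_finite_set fS => m /= nI.
  apply: contrapT => nS; apply: nI.
  have [N HN] := HS m nS.
  have [K2 fK2 HK2] := HX N.
  apply: Ifin.
  apply: (sub_finite_set _ (finite_image (fun x => (g x).2) fK2)).
  move=> k [x Xx gx].
  have [Kx|nK] := pselect (K2 x); first by exists x => //; rewrite gx.
  have [q [Bq Nq fq]] := HK2 x Xx nK.
  rewrite Ba in Bq; exfalso; apply: (HN q Bq Nq); by rewrite fq gx.
pose h := fun q => (g (f q)).1.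
pose Sm := fun m => [set n | ~ I [set k | h (n, k) = m]].
have [[m Sinf]|nA] := pselect (exists m, ~ finite_set (Sm m)).
  apply: (Key [set p | h p = m /\ Sm m p.1] [set m]).
  - move=> fin; apply: Sinf; apply: sub_finite_set fin => n Sn /= IC.
    apply: (Sn); apply: (Isub _ _ _ IC) => k hk; by split.
  - exact: finite_set1.
  - move=> m' nm; exists 0%N => q [hq _] _ e; apply: nm.
    by rewrite /= -e.
have allfin : forall m, finite_set (Sm m).
  by move=> m; apply: contrapT => ?; apply: nA; exists m.
have [Uinf|Ufin] := pselect (~ finite_set [set n | exists m, Sm m n]).
  apply: (Key [set p | Sm (h p) p.1] set0).
  - move=> fin; apply: Uinf; apply: sub_finite_set fin => n [m Smn] /= IC.
    apply: (Smn); apply: (Isub _ _ _ IC) => k hk /=.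
    by move: hk => /= ->.
  - exact: finite_set0.
  - move=> m _; have [N HN] := fin_bound _ (allfin m).
    exists N => q Sq Nq hq.
    have : Sm m q.1 by rewrite -hq.
    by move/HN; rewrite ltnNge Nq.
have {}Ufin : finite_set [set n | exists m, Sm m n] by apply: contrapT.
apply: (Key [set p | ~ I [set k | (p.1 <= h (p.1, k))%N] /\ (p.1 <= h p)%N] set0).
- move=> fin; apply: infinite_nat.
  have : [set: nat] `<=` [set n | exists m, Sm m n] `|`
      [set n | ~ I [set k | [set p | ~ I [set k | (p.1 <= h (p.1, k))%N] /\ (p.1 <= h p)%N] (n, k)]].
    move=> n _; have [Un|nU] := pselect (exists m, Sm m n); first by left.
    right.
    have nD : ~ I [set k | (n <= h (n, k))%N].
      move=> ID; apply: IT.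
      have IE : I [set k | (h (n, k) < n)%N].
        apply: (Isub _ _ _ (Ifu n (fun m => [set k | h (n, k) = m]) _)).
          by move=> k hk; exists (h (n, k)).
        by move=> m _; apply: contrapT => nI; apply: nU; exists m.
      apply: (Isub _ _ _ (IU _ _ IE ID)) => k _ /=.
      by case: (ltnP (h (n, k)) n) => H; [left|right].
    by move=> IC; apply: (nD); apply: (Isub _ _ _ IC) => k hk; split.
  by move/sub_finite_set; apply; rewrite finite_setU.
- exact: finite_set0.
- move=> m _; exists m.+1 => q [_ hq] Nq e.
  have : (m < h q)%N := leq_trans Nq hq.
  by rewrite /h e ltnn.
Qed.
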